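(* Let $\mathcal{V}$ be a non-trivial quantale, $\mathsf{F}\colon\mathbf{Set}\to\mathbf{Set}$ a functor, and $\widehat{\mathsf{F}}\colon\mathbf{Rel}(\mathcal{V})\to\mathbf{Rel}(\mathcal{V})$ a lax extension of $\mathsf{F}$, with induced lifting $\widehat{\mathsf{F}}\colon\mathbf{Cat}(\mathcal{V})\to\mathbf{Cat}(\mathcal{V})$, $(X,a)\mapsto(\mathsf{F}X,\widehat{\mathsf{F}}a)$. If the lax extension $\widehat{\mathsf{F}}$ is the Kantorovich extension $\widehat{\mathsf{F}}^\Lambda$ with respect to a class $\Lambda$ of monotone $\mathcal{V}$-valued predicate liftings for $\mathsf{F}$, then the induced lifting $\widehat{\mathsf{F}}\colon\mathbf{Cat}(\mathcal{V})\to\mathbf{Cat}(\mathcal{V})$ is the Kantorovich lifting $\mathsf{F}^\Lambda$ of $\mathsf{F}$ with respect to $\Lambda$.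
   Context: A quantale $(\mathcal{V},\otimes,k)$ is a complete lattice with a commutative monoid structure such that each $u\otimes-$ preserves joins; $\hom(u,-)$ is its right adjoint; non-trivial means $\bot\ne\top$. A $\mathcal{V}$-category is $(X,a)$ with $a\colon X\times X\to\mathcal{V}$, $k\le a(x,x)$, $a(x,y)\otimes a(y,z)\le a(x,z)$; $\mathcal{V}$-functors satisfy $a(x,y)\le b(f(x),f(y))$; category $\mathbf{Cat}(\mathcal{V})$. A $\mathcal{V}$-relation $r\colon X\nrightarrow Y$ is a map $X\times Y\to\mathcal{V}$; composition of $r\colon X\nrightarrow Y$, $s\colon Y\nrightarrow Z$ is $(s\cdot r)(x,z)=\bigvee_y r(x,y)\otimes s(y,z)$; the identity $1_X$ is $k$ on the diagonal and $\bot$ elsewhere; a function $f$ is the $\mathcal{V}$-relation with value $k$ on its graph and $\bot$ elsewhere; $r^\circ(y,x)=r(x,y)$; relations are ordered pointwise. For $r\colon X\nrightarrow Y$, $s\colon X\nrightarrow Z$, the extension $r\multimap s\colon Z\nrightarrow Y$ is $(r\multimap s)(z,y)=\bigwedge_x\hom(s(x,z),r(x,y))$. A lax extension of $\mathsf{F}$ assigns to each $r\colon X\nrightarrow Y$ a $\widehat{\mathsf{F}}r\colon\mathsf{F}X\nrightarrow\mathsf{F}Y$ such that (L1) $r\le r'\Rightarrow\widehat{\mathsf{F}}r\le\widehat{\mathsf{F}}r'$, (L2) $\widehat{\mathsf{F}}s\cdot\widehat{\mathsf{F}}r\le\widehat{\mathsf{F}}(s\cdot r)$, (L3) $\mathsf{F}f\le\widehat{\mathsf{F}}f$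 and $(\mathsf{F}f)^\circ\le\widehat{\mathsf{F}}(f^\circ)$ for functions $f$. A $\kappa$-ary $\mathcal{V}$-valued predicate lifting is a natural transformation $\lambda\colon\mathbf{Set}(-,\mathcal{V}^\kappa)\to\mathbf{Set}(\mathsf{F}-,\mathcal{V})$; identifying $f\colon X\to\mathcal{V}^\kappa$ with the $\mathcal{V}$-relation $\kappa\nrightarrow X$, $(i,x)\mapsto f(x)(i)$, and maps $\mathsf{F}X\to\mathcal{V}$ with $\mathcal{V}$-relations $1\nrightarrow\mathsf{F}X$, each component is a map from $\mathcal{V}$-relations $\kappa\nrightarrow X$ to $\mathcal{V}$-relations $1\nrightarrow\mathsf{F}X$; $\lambda$ is monotone if its components are monotone for the pointwise order. The Kantorovich extension w.r.t. a class $\Lambda$ of monotone predicate liftings is $\widehat{\mathsf{F}}^\Lambda=\bigwedge_{\lambda\in\Lambda}\widehat{\mathsf{F}}^\lambda$ with $\widehat{\mathsf{F}}^\lambda r=\bigwedge_{g\colon\kappa\nrightarrow X}\lambda(r\cdot g)\multimap\lambda(g)$ for $r\colon X\nrightarrow Y$. The Kantorovich lifting $\mathsf{F}^\Lambda$ sends $(X,a)$ to $\mathsf{F}X$ with structure $c(\mathfrak{x},\mathfrak{y})=\bigwedge\hom(\lambda_X(f)(\mathfrak{x}),\lambda_X(f)(\mathfrak{y}))$ over all $\kappa$-ary $\lambda\in\Lambda$ and $\mathcal{V}$-functors $f\colon(X,a)\to\mathcal{V}^\kappa$, where $\mathcal{V}^\kappa$ has structure $[f,g]=\bigwedge_i\hom(f(i),g(i))$.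 *)

(* Defs.v *)
Record quantale := Quantale {
  qcar :> Type;
  qle : qcar -> qcar -> Prop;
  qle_refl : forall x, qle x x;
  qle_trans : forall x y z, qle x y -> qle y z -> qle x z;
  qle_antisym : forall x y, qle x y -> qle y x -> x = y;
  qsup : (qcar -> Prop) -> qcar;
  qsup_ub : forall (S : qcar -> Prop) x, S x -> qle x (qsup S);
  qsup_least : forall (S : qcar -> Prop) y,
      (forall x, S x -> qle x y) -> qle (qsup S) y;
  qtens : qcar -> qcar -> qcar;
  qk : qcar;
  qtens_assoc : forall x y z, qtens x (qtens y z) = qtens (qtens x y) z;
  qtens_comm : forall x y, qtens x y = qtens y x;
  qtens_unit : forall x, qtens qk x = x;
  qtens_sup : forall u (S : qcar -> Prop),
      qtens u (qsup S) = qsup (fun v => exists w, S w /\ v = qtens u w)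
}.

Arguments qle {q}.
Arguments qsup {q}.
Arguments qtens {q}.
Arguments qk {q}.

Section QuantaleOps.
Variable V : quantale.

Definition qbot : V := qsup (fun _ => False).
Definition qtop : V := qsup (fun _ => True).
Definition qinf (S : V -> Prop) : V := qsup (fun w => forall s, S s -> qle w s).
(* hom(u,-) : right adjoint of u (x) - *)
Definition qhom (u v : V) : V := qsup (fun w => qle (qtens u w) v).
Definition bigsup {I : Type} (f : I -> V) : V := qsup (fun v => exists i, v = f i).
Definition biginf {I : Type} (f : I -> V) : V := qinf (fun v => exists i, v = f i).

Definition nontrivial : Prop := qbot <> qtop.

Definition rel (X Y : Type) := X -> Y -> V.

Definition rcomp {X Y Z : Type} (s : rel Y Z) (r : rel X Y) : rel X Z :=
  fun x z => bigsup (fun y => qtens (r x y) (s y z)).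

(* a function as a V-relation: k on its graph, bottom elsewhere *)
Definition graph {X Y : Type} (f : X -> Y) : rel X Y :=
  fun x y => qsup (fun v => v = qk /\ f x = y).

Definition rid (X : Type) : rel X X := graph (fun x => x).

Definition conv {X Y : Type} (r : rel X Y) : rel Y X := fun y x => r x y.

Definition rle {X Y : Type} (r r' : rel X Y) : Prop :=
  forall x y, qle (r x y) (r' x y).

Definition rext {X Y Z : Type} (r : rel X Y) (s : rel X Z) : rel Z Y :=
  fun z y => biginf (fun x => qhom (s x z) (r x y)).

Definition is_vcat {X : Type} (a : rel X X) : Prop :=
  (forall x, qle qk (a x x)) /\
  (forall x y z, qle (qtens (a x y) (a y z)) (a x z)).

Definition vfunctor {X Y : Type} (a : rel X X) (b : rel Y Y) (f : X -> Y) : Prop :=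
  forall x y, qle (a x y) (b (f x) (f y)).

Definition powstruct (kappa : Type) : rel (kappa -> V) (kappa -> V) :=
  fun f g => biginf (fun i => qhom (f i) (g i)).

End QuantaleOps.

Arguments qbot {V}.
Arguments qtop {V}.
Arguments qinf {V}.
Arguments qhom {V}.
Arguments bigsup {V I}.
Arguments biginf {V I}.

Record functor := Functor {
  fobj :> Type -> Type;
  fmap : forall (X Y : Type), (X -> Y) -> fobj X -> fobj Y;
  fmap_id : forall (X : Type) (t : fobj X), fmap X X (fun x => x) t = t;
  fmap_comp : forall (X Y Z : Type) (f : X -> Y) (g : Y -> Z) (t : fobj X),
      fmap X Z (fun x => g (f x)) t = fmap Y Z g (fmap X Y f t)
}.
Arguments fmap {_ X Y}.

Definition lax_extension (V : quantale) (F : functor)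
    (Fhat : forall X Y : Type, rel V X Y -> rel V (F X) (F Y)) : Prop :=
  (forall X Y (r r' : rel V X Y), rle V r r' -> rle V (Fhat X Y r) (Fhat X Y r')) /\
  (forall X Y Z (r : rel V X Y) (s : rel V Y Z),
      rle V (rcomp V (Fhat Y Z s) (Fhat X Y r)) (Fhat X Z (rcomp V s r))) /\
  (forall X Y (f : X -> Y),
      rle V (graph V (fmap f)) (Fhat X Y (graph V f)) /\
      rle V (conv V (graph V (fmap f))) (Fhat Y X (conv V (graph V f)))).

Record predlift (V : quantale) (F : functor) (kappa : Type) := PredLift {
  plift :> forall X : Type, (X -> kappa -> V) -> F X -> V;
  plift_nat : forall (X Y : Type) (h : Y -> X) (f : X -> kappa -> V) (t : F Y),
      plift Y (fun y => f (h y)) t = plift X f (fmap h t)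
}.
Arguments plift {V F kappa}.

Definition monotone_plift {V : quantale} {F : functor} {kappa : Type}
    (lam : predlift V F kappa) : Prop :=
  forall (X : Type) (f f' : X -> kappa -> V),
    (forall x i, qle (f x i) (f' x i)) ->
    forall t, qle (lam X f t) (lam X f' t).

(* identification of maps X -> V^kappa with V-relations kappa -/-> X and of
   maps F X -> V with V-relations 1 -/-> F X *)
Definition map_of_rel {V : quantale} {kappa X : Type} (g : rel V kappa X)
  : X -> kappa -> V := fun x i => g i x.

Definition lam_rel {V : quantale} {F : functor} {kappa : Type}
    (lam : predlift V F kappa) (X : Type) (g : rel V kappa X) : rel V unit (F X) :=
  fun _ t => lam X (map_of_rel g) t.

Definition kant_ext1 {V : quantale} {F : functor} {kappa : Type}
    (lam : predlift V F kappa) {X Y : Type} (r : rel V X Y) : rel V (F X) (F Y) :=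
  fun s t => biginf (fun g : rel V kappa X =>
     rext V (lam_rel lam Y (rcomp V r g)) (lam_rel lam X g) s t).

Definition kant_ext {V : quantale} {F : functor} {I : Type} {kappa : I -> Type}
    (Lam : forall i, predlift V F (kappa i)) {X Y : Type} (r : rel V X Y)
    : rel V (F X) (F Y) :=
  fun s t => biginf (fun i => kant_ext1 (Lam i) r s t).

Definition kant_lift {V : quantale} {F : functor} {I : Type} {kappa : I -> Type}
    (Lam : forall i, predlift V F (kappa i)) {X : Type} (a : rel V X X)
    : rel V (F X) (F X) :=
  fun s t => qinf (fun v => exists (i : I) (f : X -> kappa i -> V),
      vfunctor V a (powstruct V (kappa i)) f /\
      v = qhom (Lam i X f s) (Lam i X f t)).

(* Main.v *)
Require Import Defs.

Section L.
Variable V : quantale.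

Lemma le_sup2 (x y : V) : qle x y -> qsup (fun w => w = x \/ w = y) = y.
Proof.
  intro H. apply qle_antisym.
  - apply qsup_least. intros w [->| ->]; [exact H| apply qle_refl].
  - apply qsup_ub. now right.
Qed.

Lemma tens_monr (u x y : V) : qle x y -> qle (qtens u x) (qtens u y).
Proof.
  intro H. rewrite <- (le_sup2 x y H). rewrite qtens_sup.
  apply qsup_ub. exists x. split; [now left|reflexivity].
Qed.

Lemma tens_monl (u x y : V) : qle x y -> qle (qtens x u) (qtens y u).
Proof. intro H. rewrite (qtens_comm _ x), (qtens_comm _ y). now apply tens_monr. Qed.

Lemma hom_adj1 (u w v : V) : qle (qtens u w) v -> qle w (qhom u v).
Proof. intro H. unfold qhom. apply qsup_ub. exact H. Qed.

Lemma hom_eval (u v : V) : qle (qtens u (qhom u v)) v.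
Proof.
  unfold qhom. rewrite qtens_sup. apply qsup_least.
  intros x [w [Hw ->]]. exact Hw.
Qed.

Lemma hom_adj2 (u w v : V) : qle w (qhom u v) -> qle (qtens u w) v.
Proof. intro H. eapply qle_trans; [apply tens_monr; exact H| apply hom_eval]. Qed.

Lemma hom_mon2 (u v v' : V) : qle v v' -> qle (qhom u v) (qhom u v').
Proof. intro H. apply hom_adj1. eapply qle_trans; [apply hom_eval|exact H]. Qed.

Lemma hom_anti1 (u u' v : V) : qle u u' -> qle (qhom u' v) (qhom u v).
Proof. intro H. apply hom_adj1. eapply qle_trans; [apply tens_monl; exact H|apply hom_eval]. Qed.

Lemma qinf_lb (S : V -> Prop) s : S s -> qle (qinf S) s.
Proof. intro Hs. unfold qinf. apply qsup_least. intros w Hw. now apply Hw. Qed.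

Lemma qinf_glb (S : V -> Prop) y : (forall s, S s -> qle y s) -> qle y (qinf S).
Proof. intro H. unfold qinf. apply qsup_ub. exact H. Qed.

Lemma biginf_lb {J : Type} (h : J -> V) j : qle (biginf h) (h j).
Proof. apply qinf_lb. now exists j. Qed.

Lemma biginf_glb {J : Type} (h : J -> V) y : (forall j, qle y (h j)) -> qle y (biginf h).
Proof. intro H. apply qinf_glb. intros s [j ->]. apply H. Qed.

Lemma bigsup_ub {J : Type} (h : J -> V) j : qle (h j) (bigsup h).
Proof. apply qsup_ub. now exists j. Qed.

Lemma bigsup_least {J : Type} (h : J -> V) y : (forall j, qle (h j) y) -> qle (bigsup h) y.
Proof. intro H. apply qsup_least. intros s [j ->]. apply H. Qed.

Lemma tens_bigsup_le {J : Type} (u : V) (h : J -> V) v :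
  (forall j, qle (qtens u (h j)) v) -> qle (qtens u (bigsup h)) v.
Proof.
  intro H. unfold bigsup. rewrite qtens_sup. apply qsup_least.
  intros x [w [[j ->] ->]]. apply H.
Qed.
End L.

Theorem theorem5 (V : quantale) (F : functor) (I : Type) (kappa : I -> Type)
    (Lam : forall i, predlift V F (kappa i))
    (Fhat : forall X Y : Type, rel V X Y -> rel V (F X) (F Y)) :
  nontrivial V ->
  (forall i, monotone_plift (Lam i)) ->
  lax_extension V F Fhat ->
  (forall (X Y : Type) (r : rel V X Y) s t, Fhat X Y r s t = kant_ext Lam r s t) ->
  forall (X : Type) (a : rel V X X), is_vcat V a ->
    forall s t : F X, Fhat X X a s t = kant_lift Lam a s t.
Proof.
  intros _ Hmon _ HF X a [Hrefl Htrans] s t.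
  rewrite HF. apply qle_antisym.
  - unfold kant_lift. apply qinf_glb. intros v [i [f [Hf ->]]].
    unfold kant_ext. eapply qle_trans; [apply (biginf_lb V _ i)|].
    unfold kant_ext1.
    eapply qle_trans; [apply (biginf_lb V _ (fun j x => f x j))|].
    unfold rext. eapply qle_trans; [apply (biginf_lb V _ tt)|].
    unfold lam_rel. apply hom_mon2. apply Hmon.
    intros y j. unfold map_of_rel, rcomp. apply bigsup_least. intros x.
    apply hom_adj2. eapply qle_trans; [apply Hf|]. unfold powstruct.
    apply (biginf_lb V (fun j0 => qhom (f x j0) (f y j0)) j).
  - unfold kant_ext. apply biginf_glb. intros i.
    unfold kant_ext1. apply biginf_glb. intros g.
    unfold rext. apply biginf_glb. intros [].
    unfold lam_rel.
    set (f := map_of_rel (rcomp V a g)).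
    eapply qle_trans with (qhom (Lam i X f s) (Lam i X f t)).
    + unfold kant_lift. apply qinf_lb. exists i, f. split; [|reflexivity].
      intros x y. unfold powstruct. apply biginf_glb. intros j.
      apply hom_adj1. rewrite qtens_comm.
      unfold f, map_of_rel, rcomp. apply tens_bigsup_le. intros z.
      rewrite (qtens_comm V (a x y)), <- qtens_assoc.
      eapply qle_trans with (qtens (g j z) (a z y)); [apply tens_monr; apply Htrans|].
      apply (bigsup_ub V (fun z => qtens (g j z) (a z y)) z).
    + apply hom_anti1. apply Hmon. intros x j. unfold f, map_of_rel, rcomp.
      eapply qle_trans; [|apply (bigsup_ub V (fun z => qtens (g j z) (a z x)) x)].
      eapply qle_trans with (qtens (g j x) qk); [rewrite qtens_comm, qtens_unit; apply qle_refl | apply tens_monr, Hrefl].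
Qed.
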